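(* Let $G$ be a $(2K_2, HVN)$-free graph. Then $\chi(G)\le\omega(G)+3$.
   Context: All graphs are finite, simple and undirected. $2K_2$ is the disjoint union of two edges. $HVN$ is the graph consisting of a $K_4$ together with one further vertex adjacent to exactly two vertices of the $K_4$. A graph is $\mathcal F$-free if it has no induced subgraph isomorphic to a member of $\mathcal F$. $\chi$ is the chromatic number and $\omega$ the clique number. *)

(* Defs.v *)
From mathcomp Require Import all_boot.
Set Implicit Arguments. Unset Strict Implicit. Unset Printing Implicit Defensive.

Definition simple_graph (T : finType) (e : rel T) : Prop :=
  symmetric e /\ irreflexive e.

Definition induces (T : finType) (e : rel T) (k : nat) (h : rel 'I_k) : Prop :=
  exists f : 'I_k -> T, injective f /\ forall i j, e (f i) (f j) = h i j.

Definition twoK2 : rel 'I_4 := fun i j =>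
  let a := nat_of_ord i in let b := nat_of_ord j in
  ((a == 0) && (b == 1)) || ((a == 1) && (b == 0)) ||
  ((a == 2) && (b == 3)) || ((a == 3) && (b == 2)).

(* HVN : K_4 on vertices 0,1,2,3 plus vertex 4 adjacent exactly to 0 and 1. *)
Definition HVN : rel 'I_5 := fun i j =>
  let a := nat_of_ord i in let b := nat_of_ord j in
  [|| (a != b) && (a < 4) && (b < 4),
      (a == 4) && (b < 2) | (b == 4) && (a < 2)].

Definition is_clique (T : finType) (e : rel T) (S : {set T}) : bool :=
  [forall x in S, forall y in S, (x != y) ==> e x y].

Definition clique_number (T : finType) (e : rel T) : nat :=
  \max_(S : {set T} | is_clique e S) #|S|.

Definition colorable (T : finType) (e : rel T) (k : nat) : bool :=
  [exists c : {ffun T -> 'I_k}, forall x, forall y, e x y ==> (c x != c y)].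

(* chromatic number: least k admitting a proper k-colouring
   (for a simple graph some k <= #|T| always works). *)
Definition chromatic_number (T : finType) (e : rel T) : nat :=
  \big[minn/#|T|]_(k < #|T|.+1 | colorable e k) k.

(* Main.v *)
Require Import Defs.
From mathcomp Require Import all_boot zify.
Set Implicit Arguments. Unset Strict Implicit. Unset Printing Implicit Defensive.

Lemma ne_of (T : finType) (e : rel T) u v w : e u w -> ~~ e v w -> u != v.
Proof. by move=> h1 h2; apply/eqP => E; move: h2; rewrite -E h1. Qed.

Lemma ne_adj (T : finType) (e : rel T) u v : irreflexive e -> e u v -> u != v.
Proof. by move=> irr h; apply/eqP => E; rewrite E irr in h. Qed.

Lemma no_2K2 (T : finType) (e : rel T) (p0 p1 p2 p3 : T) :
  simple_graph e -> ~ induces e twoK2 ->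
  e p0 p1 -> e p2 p3 -> ~~ e p0 p2 -> ~~ e p0 p3 -> ~~ e p1 p2 -> ~~ e p1 p3 -> False.
Proof.
move=> [sym irr] no H01 H23 N02 N03 N12 N13; apply: no.
have H10 : e p1 p0 by rewrite sym.
have H32 : e p3 p2 by rewrite sym.
have N20 : ~~ e p2 p0 by rewrite sym.
have N30 : ~~ e p3 p0 by rewrite sym.
have N21 : ~~ e p2 p1 by rewrite sym.
have N31 : ~~ e p3 p1 by rewrite sym.
have U : uniq [:: p0; p1; p2; p3].
  rewrite /= !inE !negb_or (ne_adj irr H01) (ne_adj irr H23).
  by rewrite (ne_of H01 N21) (ne_of H01 N31) (ne_of H10 N20) (ne_of H10 N30).
exists (fun i : 'I_4 => nth p0 [:: p0; p1; p2; p3] i); split.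
- by move=> i j /eqP; rewrite nth_uniq // => /eqP /val_inj.
- move: N02 N03 N12 N13 N20 N30 N21 N31 => /negbTE N02 /negbTE N03 /negbTE N12 /negbTE N13
    /negbTE N20 /negbTE N30 /negbTE N21 /negbTE N31.
  move=> [[|[|[|[|i]]]] Hi] [[|[|[|[|j]]]] Hj] //=; rewrite /twoK2 /= ?irr //.
Qed.

Lemma no_HVN (T : finType) (e : rel T) (p0 p1 p2 p3 p4 : T) :
  simple_graph e -> ~ induces e HVN ->
  e p0 p1 -> e p0 p2 -> e p0 p3 -> e p1 p2 -> e p1 p3 -> e p2 p3 ->
  e p4 p0 -> e p4 p1 -> ~~ e p4 p2 -> ~~ e p4 p3 -> False.
Proof.
move=> [sym irr] no H01 H02 H03 H12 H13 H23 H40 H41 N42 N43; apply: no.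
have H10 : e p1 p0 by rewrite sym.
have H20 : e p2 p0 by rewrite sym.
have H30 : e p3 p0 by rewrite sym.
have H21 : e p2 p1 by rewrite sym.
have H31 : e p3 p1 by rewrite sym.
have H32 : e p3 p2 by rewrite sym.
have H04 : e p0 p4 by rewrite sym.
have H14 : e p1 p4 by rewrite sym.
have N24 : ~~ e p2 p4 by rewrite sym.
have N34 : ~~ e p3 p4 by rewrite sym.
have U : uniq [:: p0; p1; p2; p3; p4].
  rewrite /= !inE !negb_or (ne_adj irr H01) (ne_adj irr H02) (ne_adj irr H03).
  rewrite (ne_adj irr H12) (ne_adj irr H13) (ne_adj irr H23) (ne_adj irr H04).
  by rewrite (ne_adj irr H14) (ne_of H23 N43) (ne_of H32 N42).
exists (fun i : 'I_5 => nth p0 [:: p0; p1; p2; p3; p4] i); split.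
- by move=> i j /eqP; rewrite nth_uniq // => /eqP /val_inj.
- move: N42 N43 N24 N34 => /negbTE N42 /negbTE N43 /negbTE N24 /negbTE N34.
  move=> [[|[|[|[|[|i]]]]] Hi] [[|[|[|[|[|j]]]]] Hj] //=; rewrite /HVN /= ?irr //.
Qed.

Lemma colorable_of (T U : finType) (e : rel T) (c : T -> U) (P : {set U}) k :
  (forall x y, e x y -> c x != c y) -> (forall x, c x \in P) -> #|P| <= k ->
  colorable e k.
Proof.
move=> prop inP Pk; apply/existsP.
have inE' x : c x \in enum P by rewrite mem_enum.
have lt x : index (c x) (enum P) < k.
  by apply: leq_trans Pk; rewrite cardE index_mem.
exists [ffun x => Ordinal (lt x)]; apply/forallP=> x; apply/forallP=> y.
apply/implyP=> exy; rewrite !ffunE; apply/negP => /eqP /(congr1 val) /= H.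
have := prop x y exy.
by rewrite -[c x](nth_index (c x) (inE' x)) H nth_index ?eqxx.
Qed.

Lemma bigmin_le (I : eqType) (s : seq I) (P : pred I) (F : I -> nat) d x :
  x \in s -> P x -> \big[minn/d]_(i <- s | P i) F i <= F x.
Proof.
elim: s => // y s IH; rewrite inE big_cons => /orP [/eqP <- -> | hx hP].
- by rewrite geq_min leqnn.
- by case: (P y); rewrite ?geq_min IH ?orbT.
Qed.

Lemma chi_le (T : finType) (e : rel T) k : colorable e k -> chromatic_number e <= k.
Proof.
move=> ck; rewrite /chromatic_number.
case: (leqP k #|T|) => hk.
- have hk' : k < #|T|.+1 by rewrite ltnS.
  have := @bigmin_le _ (index_enum 'I_#|T|.+1) (fun k => colorable e k) (fun i : 'I_#|T|.+1 => nat_of_ord i) #|T| (Ordinal hk') (mem_index_enum _) ck.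
  by [].
- apply: leq_trans (ltnW hk).
  apply: (big_ind (fun m => m <= #|T|)) => //.
  - by move=> m n hm hn; rewrite geq_min hm.
  - by move=> i _; rewrite -ltnS.
Qed.

Lemma cliqueP (T : finType) (e : rel T) (S : {set T}) u v :
  is_clique e S -> u \in S -> v \in S -> u != v -> e u v.
Proof.
by move=> /forallP/(_ u)/implyP hS hu hv; move: (hS hu) => /forallP/(_ v)/implyP/(_ hv)/implyP.
Qed.

Lemma clique_le (T : finType) (e : rel T) S : is_clique e S -> #|S| <= clique_number e.
Proof. by move=> h; apply: (leq_bigmax_cond (F := fun S : {set T} => #|S|)). Qed.

Lemma clique_max (T : finType) (e : rel T) :
  exists2 A : {set T}, is_clique e A & #|A| = clique_number e.
Proof.
have c0 : is_clique e set0.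
  by apply/forallP => x; apply/implyP; rewrite inE.
case: (@arg_maxnP _ set0 (fun S => is_clique e S) (fun S => #|S|) c0) => A hA hmax.
exists A => //; apply/eqP; rewrite eqn_leq clique_le //=.
by apply/bigmax_leqP => S hS; exact: hmax.
Qed.

Lemma clique_add (T : finType) (e : rel T) (S : {set T}) x :
  simple_graph e -> is_clique e S -> (forall y, y \in S -> e x y) -> is_clique e (x |: S).
Proof.
move=> [sym irr] cS hx; apply/forallP=> u; apply/implyP=> hu; apply/forallP=> v.
apply/implyP=> hv; apply/implyP.
rewrite !in_setU1 in hu hv.
case/orP: hu => [/eqP->|hu]; case/orP: hv => [/eqP->|hv].
- by rewrite eqxx.
- by move=> _; exact: hx.
- by move=> _; rewrite sym; apply: hx.
- exact: cliqueP cS hu hv.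
Qed.

Lemma clique_sub (T : finType) (e : rel T) (S A : {set T}) :
  S \subset A -> is_clique e A -> is_clique e S.
Proof.
move=> /subsetP sub cA; apply/forallP=> u; apply/implyP=> hu; apply/forallP=> v.
apply/implyP=> hv; apply/implyP; exact: cliqueP cA (sub _ hu) (sub _ hv).
Qed.

Lemma ne_of2 (T : finType) (e : rel T) u v w : e w u -> ~~ e w v -> u != v.
Proof. by move=> h1 h2; apply/eqP => E; move: h2; rewrite -E h1. Qed.

Theorem corollary3p8 (T : finType) (e : rel T) :
  simple_graph e ->
  ~ induces e twoK2 ->
  ~ induces e HVN ->
  chromatic_number e <= clique_number e + 3.
Proof.
move=> sg no2 noH; have [sym irr] := sg.
have [A cA wA] := clique_max e.
have maxc S : is_clique e S -> #|S| <= #|A| by rewrite wA; exact: clique_le.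
rewrite -wA.
pose NB x := [set a in A | ~~ e x a].
have NBsub x : NB x \subset A by apply/subsetP => a; rewrite inE => /andP [].
have NB0 x : x \notin A -> 0 < #|NB x|.
  move=> xA; rewrite card_gt0; apply/negP => /eqP H0.
  have hx : forall y, y \in A -> e x y.
    move=> y yA; apply/negPn/negP => nxy.
    have : y \in NB x by rewrite inE yA nxy.
    by rewrite H0 inE.
  have := maxc _ (clique_add sg cA hx); rewrite cardsU1 xA /=.
  by rewrite add1n ltnn.
have single a x y : a \in A -> x \notin A -> y \notin A -> e x y ->
    (forall b, b \in A -> b != a -> e x b) ->
    (forall b, b \in A -> b != a -> e y b) -> False.
  move=> aA xA yA exy hx hy.
  have cS : is_clique e (A :\ a) by apply: clique_sub cA; exact: subD1set.
  have yS : y \notin A :\ a by rewrite inE (negbTE yA) andbF.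
  have cS1 : is_clique e (y |: (A :\ a)).
    apply: clique_add => // b; rewrite inE => /andP [ba bA]; by apply: hy => //; rewrite inE in ba.
  have xS1 : x \notin y |: (A :\ a).
    apply/negP; rewrite !inE => /orP [/eqP E|/andP [_ xA']].
    - by rewrite E irr in exy.
    - by rewrite xA' in xA.
  have cS2 : is_clique e (x |: (y |: (A :\ a))).
    apply: clique_add => // b; rewrite !inE => /orP [/eqP -> //| /andP [ba bA]].
    by apply: hx => //; rewrite inE in ba.
  have := maxc _ cS2; rewrite cardsU1 xS1 cardsU1 yS [#|A|](cardsD1 a A) aA /=.
  lia.
have adj1 z a : NB z = [set a] -> forall b, b \in A -> b != a -> e z b.
  move=> Ha b bA ba; apply/negPn/negP => nb.
  have : b \in NB z by rewrite inE bA nb.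
  by rewrite Ha inE (negbTE ba).
have inA1 z a : NB z = [set a] -> a \in A.
  move=> Ha; have : a \in NB z by rewrite Ha set11.
  by rewrite inE => /andP [].
have two2K2 x y c d : x \notin A -> y \notin A -> e x y -> c \in NB x -> d \in NB x ->
    c \in NB y -> d \in NB y -> c != d -> False.
  move=> xA yA exy; rewrite !inE => /andP [hcA nxc] /andP [dA nxd] /andP [_ nyc] /andP [_ nyd] cd.
  exact: (no_2K2 sg no2 exy (cliqueP cA hcA dA cd) nxc nxd nyc nyd).
case: (leqP #|A| 3) => hw.
-
  pose col x := if x \in A then [set x] else
    if #|NB x| <= 2 then NB x else NB x :\ odflt x [pick a in NB x].
  have colNB x : x \notin A -> [/\ col x \subset NB x,
      (#|col x| <= 1 -> col x = NB x), 0 < #|col x| & #|col x| <= 2].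
    move=> xA; rewrite /col (negbTE xA); case: ifP => h.
    + by split => //; exact: NB0.
    + have h1 := subset_leq_card (NBsub x).
      case: pickP => [a ha | none]; last first.
        by have := NB0 x xA; rewrite (eq_card0 none).
      have := cardsD1 a (NB x); rewrite ha /= => hc.
      split.
      * exact: subD1set.
      * move=> h2; exfalso; move: h; rewrite hc; lia.
      * lia.
      * lia.
  apply: chi_le.
  apply: (@colorable_of _ _ e col [set S in powerset A | (0 < #|S|) && (#|S| <= 2)]).
  + move=> x y exy; apply/negP => /eqP Heq.
    case xA: (x \in A); case yA: (y \in A).
    * move: Heq; rewrite /col xA yA => /set1_inj E; by rewrite E irr in exy.
    * have [s1 _ _ _] := colNB y (negbT yA).
      have : x \in NB y by apply: (subsetP s1); rewrite -Heq /col xA set11.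
      by rewrite inE sym exy andbF.
    * have [s1 _ _ _] := colNB x (negbT xA).
      have : y \in NB x by apply: (subsetP s1); rewrite Heq /col yA set11.
      by rewrite inE exy andbF.
    * have [sx ex px _] := colNB x (negbT xA).
      have [sy ey py _] := colNB y (negbT yA).
      case: (leqP #|col x| 1) => h.
      -- have h1 : #|col x| == 1 by rewrite eqn_leq h px.
         case/cards1P: h1 => a Ha.
         have Hx : NB x = [set a] by rewrite -ex.
         have Hy : NB y = [set a] by rewrite -ey -Heq // Heq.
         exact: (single a x y (inA1 _ _ Hx) (negbT xA) (negbT yA) exy (adj1 _ _ Hx) (adj1 _ _ Hy)).
      -- case/card_gt1P: h => c [d [hc hd cd]].
         apply: (two2K2 x y c d (negbT xA) (negbT yA) exy) => //.
         ++ exact: (subsetP sx).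
         ++ exact: (subsetP sx).
         ++ by apply: (subsetP sy); rewrite -Heq.
         ++ by apply: (subsetP sy); rewrite -Heq.
  + move=> x; rewrite inE powersetE; case xA: (x \in A).
    * by rewrite /col xA sub1set xA cards1.
    * have [s1 _ p1 p2] := colNB x (negbT xA).
      by rewrite p1 p2 (subset_trans s1 (NBsub x)).
  + set P := [set S in powerset A | _].
    have s0 : set0 \in powerset A by rewrite powersetE sub0set.
    have hQ : #|powerset A :\ set0| = (2 ^ #|A|).-1.
      by rewrite -card_powerset (cardsD1 set0 (powerset A)) s0.
    have sP : P \subset powerset A :\ set0.
      apply/subsetP => S; rewrite !inE => /andP [-> /andP [h _]].
      by rewrite andbT; apply/eqP => E; rewrite E cards0 in h.
    have [h3 | h3] : #|A| = 3 \/ #|A| <= 2 by lia.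
    * have sP' : P \subset (powerset A :\ set0) :\ A.
        apply/subsetP => S hS; rewrite in_setD1 (subsetP sP) // andbT.
        apply/eqP => E; move: hS; rewrite E !inE h3 andbF; done.
      have AQ : A \in powerset A :\ set0.
        by rewrite !inE subxx andbT; apply/eqP => E; rewrite E cards0 in h3.
      have := subset_leq_card sP'.
      have := cardsD1 A (powerset A :\ set0); rewrite AQ hQ h3 /=.
      lia.
    * have := subset_leq_card sP; rewrite hQ.
      have h3' : #|A| = 0 \/ #|A| = 1 \/ #|A| = 2 by lia.
      by case: h3' => [->|[->|->]] h; apply: (leq_trans h).
-
  pose col x := if x \in A then [set x] else if #|NB x| == 1 then NB x else set0.
  have atmost1 z : z \notin A -> #|NB z| != 1 -> #|[set a in A | e z a]| <= 1.
    move=> zA hz.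
    have : 1 < #|NB z| by have := NB0 z zA; rewrite leq_eqVlt eq_sym (negbTE hz).
    case/card_gt1P => c1 [c2 [h1 h2 h12]].
    rewrite leqNgt; apply/negP => /card_gt1P [a [b [ha hb hab]]].
    move: h1 h2 ha hb; rewrite !inE => /andP [c1A n1] /andP [c2A n2] /andP [aA ea] /andP [bA eb].
    apply: (no_HVN sg noH (p0:=a) (p1:=b) (p2:=c1) (p3:=c2) (p4:=z)) => //.
    + exact: cliqueP cA aA bA hab.
    + exact: cliqueP cA aA c1A (ne_of2 ea n1).
    + exact: cliqueP cA aA c2A (ne_of2 ea n2).
    + exact: cliqueP cA bA c1A (ne_of2 eb n1).
    + exact: cliqueP cA bA c2A (ne_of2 eb n2).
    + exact: cliqueP cA c1A c2A h12.
  apply: chi_le.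
  apply: (@colorable_of _ _ e col (set0 |: [set [set a] | a in A])).
  + move=> x y exy; apply/negP => /eqP Heq.
    case xA: (x \in A); case yA: (y \in A).
    * move: Heq; rewrite /col xA yA => /set1_inj E; by rewrite E irr in exy.
    * move: Heq; rewrite /col xA yA; case: ifP => [_ E|_ /setP /(_ x)].
      -- have : x \in NB y by rewrite -E set11.
         by rewrite inE sym exy andbF.
      -- by rewrite !inE eqxx.
    * move: Heq; rewrite /col xA yA; case: ifP => [_ E|_ /setP /(_ y)].
      -- have : y \in NB x by rewrite E set11.
         by rewrite inE exy andbF.
      -- by rewrite !inE eqxx.
    * move: Heq; rewrite /col xA yA; case: ifP => hx; case: ifP => hy.
      -- move=> E; case/cards1P: hx => a Ha.
         have Hy : NB y = [set a] by rewrite -E.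
         exact: (single a x y (inA1 _ _ Ha) (negbT xA) (negbT yA) exy (adj1 _ _ Ha) (adj1 _ _ Hy)).
      -- by move=> E; move: hx; rewrite E cards0.
      -- by move=> E; move: hy; rewrite -E cards0.
      -- move=> _.
         have h1 := atmost1 x (negbT xA) (negbT hx).
         have h2 := atmost1 y (negbT yA) (negbT hy).
         have : 1 < #|(A :\: [set a in A | e x a]) :\: [set a in A | e y a]|.
           rewrite cardsD (cardsD A).
           have := subset_leq_card (subsetIr (A :\: [set a in A | e x a]) [set a in A | e y a]).
           have := subset_leq_card (subsetIr A [set a in A | e x a]).
           lia.
         case/card_gt1P => c [d [hc hd cd]].
         move: hc hd; rewrite !inE => /andP [ny1 /andP [nx1 cA1]] /andP [ny2 /andP [nx2 cA2]].
         rewrite cA1 /= in nx1 ny1; rewrite cA2 /= in nx2 ny2.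
         exact: (no_2K2 sg no2 exy (cliqueP cA cA1 cA2 cd) nx1 nx2 ny1 ny2).
  + move=> x; rewrite /col; case: ifP => xA.
    * by rewrite in_setU1 imset_f ?orbT.
    * case: ifP => h; last by rewrite in_setU1 eqxx.
      case/cards1P: h => a Ha; rewrite Ha in_setU1 imset_f ?orbT //.
      exact: inA1 _ _ Ha.
  + rewrite cardsU1.
    have := leq_imset_card (fun a : T => [set a]) A.
    have := leq_b1 (set0 \notin [set [set a] | a in A]).
    lia.
Qed.
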